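(* Let $n$ be a positive integer and let $(a_{i,j})_{0\le i\le n,\ 0\le j\le n-1}$ be an array of elements of a commutative ring. Then $$\det_{0\le i,j\le n-1}(a_{i,j}+a_{i+1,j})=\sum_{s=0}^{n}\det_{0\le i,j\le n-1}\bigl(a_{i+\chi(i\ge s),j}\bigr),$$ where $\chi(\mathcal S)=1$ if the statement $\mathcal S$ is true and $\chi(\mathcal S)=0$ otherwise. *)

(* Defs.v *)
From mathcomp Require Import all_boot all_algebra.

(* Main.v *)
Require Import Defs.
From mathcomp Require Import all_boot all_algebra.
From mathcomp Require Import fingroup perm.
Import GRing.Theory.
Local Open Scope ring_scope.

Section Aux.
Variables (R : comPzRingType) (n : nat) (a : 'M[R]_(n.+1, n)).

Definition Af (f : {ffun 'I_n -> bool}) : 'M[R]_n :=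
  \matrix_(i < n, j < n) a (inord (i + f i)) j.

Definition gs (s : 'I_n.+1) : {ffun 'I_n -> bool} := [ffun i : 'I_n => (s <= i)%N].

Lemma expand :
  \det (\matrix_(i < n, j < n) (a (widen_ord (leqnSn n) i) j + a (lift ord0 i) j))
  = \sum_(f : {ffun 'I_n -> bool}) \det (Af f).
Proof.
rewrite /determinant.
transitivity (\sum_(s : 'S_n) \sum_(f : {ffun 'I_n -> bool})
   (-1) ^+ s * \prod_(i < n) a (inord (i + f i)) (s i)).
  apply: eq_bigr => s _; rewrite -mulr_sumr -(bigA_distr_bigA (fun (i : 'I_n) (b : bool) => a (inord (i + b)) (s i))); congr (_ * _).
  apply: eq_bigr => i _; rewrite big_bool mxE [RHS]addrC.
  congr (a _ _ + a _ _); apply: val_inj; rewrite /= inordK //; rewrite ?addn0 ?addn1 //.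
    by apply: leq_trans (ltn_ord i) _.
  by rewrite ltnS.
rewrite [LHS]exchange_big; apply: eq_bigr => f _; apply: eq_bigr => s _.
by congr (_ * _); apply: eq_bigr => i _; rewrite mxE.
Qed.
Lemma gs_inj : injective gs.
Proof.
move=> s t /ffunP H; apply/eqP; apply/negPn/negP => Hne.
wlog lt : s t H Hne / (s < t)%N.
  move=> W; case: (ltngtP s t) => h; first exact: (W s t).
  - by apply: (W t s) => //; rewrite eq_sym.
  - by move: Hne; rewrite (val_inj h) eqxx.
have sn : (s < n)%N by apply: leq_trans lt _; rewrite -ltnS.
have := H (Ordinal sn); rewrite !ffunE /= leqnn.
by rewrite leqNgt lt.
Qed.

Lemma nonmono_zero f : f \notin [set gs s | s in setT] -> \det (Af f) = 0.
Proof.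
move=> Hf.
case: (boolP [exists i : 'I_n, [exists j : 'I_n, (j == i.+1 :> nat) && f i && ~~ f j]]).
  case/existsP => i /existsP [j /andP [/andP [/eqP ji fi] fj]].
  apply: (determinant_alternate (i1:=i) (i2:=j)).
    by rewrite -val_eqE /= ji neq_ltn ltnSn.
  move=> k; rewrite !mxE; congr (a _ _); apply: val_inj => /=.
  by rewrite fi (negbTE fj) ji addn0 addn1.
rewrite negb_exists => /forallP Hm.
exfalso; move/negP: Hf; apply.
have exP : exists k, [exists i : 'I_n, (val i == k) && f i] || (k == n).
  by exists n; rewrite eqxx orbT.
case: (ex_minnP exP) => s Ps Smin.
have sn : (s <= n)%N.
  case/orP: Ps => [/existsP [i /andP [/eqP <- _]] | /eqP ->]; last by []. exact: ltnW (ltn_ord i).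
apply/imsetP; exists (Ordinal (n:=n.+1) (m:=s) sn); first by rewrite in_setT.
apply/ffunP => i; rewrite ffunE /=.
case: (leqP s i) => si.
- have [i0 [vi0 fi0]] : exists i0 : 'I_n, val i0 = s /\ f i0.
    case/orP: Ps => [/existsP [i0 /andP [/eqP vi0 fi0]] | /eqP E].
      by exists i0.
    by move: si; rewrite E leqNgt ltn_ord.
  have mono : forall d (h : (s + d < n)%N), f (Ordinal h).
    elim=> [|d IH] h.
      by have -> : Ordinal h = i0 by apply: val_inj; rewrite /= addn0.
    have h' : (s + d < n)%N by apply: ltnW; rewrite -addnS.
    have := Hm (Ordinal h'); rewrite negb_exists => /forallP /(_ (Ordinal h)) /=.
    by rewrite -addnS eqxx (IH h') /= negbK.
  have h : (s + (i - s) < n)%N by rewrite subnKC.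
  have := mono _ h.
  by have -> : Ordinal h = i by apply: val_inj; rewrite /= subnKC.
- apply/negbTE/negP => fi.
  have := Smin i; rewrite leqNgt si /= => H; suff: false by []; apply: H.
  by apply/orP; left; apply/existsP; exists i; rewrite eqxx fi.
Qed.

End Aux.

Theorem lemma4 (R : comPzRingType) (n : nat) (hn : (0 < n)%N)
    (a : 'M[R]_(n.+1, n)) :
  \det (\matrix_(i < n, j < n) (a (widen_ord (leqnSn n) i) j + a (lift ord0 i) j))
  = \sum_(s < n.+1)
      \det (\matrix_(i < n, j < n) a (inord (i + (s <= i)%N)) j).
Proof.
rewrite expand (bigID (fun f : {ffun 'I_n -> bool} => f \in [set @gs n s | s : 'I_n.+1 in setT])) /=.
rewrite [X in _ + X]big1 ?addr0; last by move=> f /negP Hf; apply: nonmono_zero; apply/negP.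
rewrite big_imset /=; last by move=> x y _ _; apply: gs_inj.
apply: eq_big => [s|s _]; first by rewrite in_setT. rewrite /Af; congr (\det _).
by apply/matrixP => i j; rewrite !mxE ffunE.
Qed.
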